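(* Let $\mathcal{A}$ be a finite abelian group with $|\mathcal{A}|\ge 3$. Let $H_1(p_1,p_2)$ denote a graph consisting of a triangle $v_2v_3v_4$, a vertex $v_1$ adjacent to $v_2$, $p_1\ge0$ pendant vertices adjacent to $v_1$, $p_2\ge 0$ pendant vertices adjacent to $v_2$, and $t\ge 1$ further neighbours of $v_1$, each of which is a support vertex all of whose neighbours other than $v_1$ are pendant vertices. Consider the case $p_1=0$. Then $H_1(0,p_2)$ is $\mathcal{A}$-vertex magic if and only if $p_2=0$ and the following holds: if $v_1$ has a weak support neighbour, there exists $g\in\mathcal{A}\setminus\{0\}$ with $d(v_1)\not\equiv 1$, $d(v_1)\not\equiv 2$, $2d(v_1)\not\equiv 2$ and $2d(v_1)\not\equiv 3 \pmod{o(g)}$; and if every support neighbour of $v_1$ is a strong support vertex, there exists $g\in\mathcal{A}\setminus\{0\}$ with $d(v_1)\not\equiv 1$, $d(v_1)\not\equiv 2$ and $2d(v_1)\not\equiv 3\pmod{o(g)}$.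
   Context: A pendant vertex has degree $1$; a support vertex is a vertex adjacent to a pendant vertex; it is a weak support vertex if it is adjacent to exactly one pendant vertex and a strong support vertex if adjacent to at least two. $d(v)$ is the degree of $v$ and $o(g)$ the order of $g$. A map $\ell:V(G)\to\mathcal{A}\setminus\{0\}$ is an $\mathcal{A}$-vertex magic labeling if there is $\mu\in\mathcal{A}$ with $\sum_{u\in N(v)}\ell(u)=\mu$ for every vertex $v$; $G$ is $\mathcal{A}$-vertex magic if such a labeling exists. *)

(* Defs.v *)
From mathcomp Require Import all_boot all_order all_algebra all_fingroup.
Set Implicit Arguments. Unset Strict Implicit. Unset Printing Implicit Defensive.
Import GRing.Theory.

Definition vertex_magic_labeling (A : zmodType) (V : finType) (adj : rel V)
    (l : V -> A) : Prop :=
  (forall v, l v != 0%R) /\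
  exists mu : A, forall v, (\sum_(u | adj v u) l u)%R = mu.

Definition vertex_magic (A : zmodType) (V : finType) (adj : rel V) : Prop :=
  exists l : V -> A, vertex_magic_labeling adj l.

Definition deg (V : finType) (adj : rel V) (v : V) : nat := #|[set u | adj v u]|.

(* The graph H_1(0,p2) with t support neighbours of v1, the i-th of which
   carries k i pendant vertices.
   Vertex type:
     inl (inl a), a : 'I_4     : core vertices v1 (a=0), v2 (a=1), v3 (a=2), v4 (a=3)
     inl (inr j), j : 'I_p2    : pendant vertices adjacent to v2
     inr (inl i), i : 'I_t     : support neighbours u_i of v1
     inr (inr s), s = (i; j)   : the j-th pendant vertex adjacent to u_i *)
Definition H1V (p2 t : nat) (k : 'I_t -> nat) : finType :=
  (('I_4 + 'I_p2) + ('I_t + {i : 'I_t & 'I_(k i)}))%type.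

Definition H1edge (p2 t : nat) (k : 'I_t -> nat) (x y : H1V p2 k) : bool :=
  match x, y with
  | inl (inl a), inl (inl b) =>
      [|| ((a : nat) == 0) && ((b : nat) == 1),
          ((a : nat) == 1) && ((b : nat) == 2),
          ((a : nat) == 2) && ((b : nat) == 3)
        | ((a : nat) == 1) && ((b : nat) == 3)]
  | inl (inl a), inl (inr _) => (a : nat) == 1
  | inl (inl a), inr (inl _) => (a : nat) == 0
  | inr (inl i), inr (inr s) => tag s == i
  | _, _ => false
  end.

Definition H1adj (p2 t : nat) (k : 'I_t -> nat) : rel (H1V p2 k) :=
  fun x y => H1edge x y || H1edge y x.

Definition H1v1 (p2 t : nat) (k : 'I_t -> nat) : H1V p2 k :=
  inl (inl (@Ordinal 4 0 isT)).

(* Main.v *)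
Require Import Defs.
From mathcomp Require Import all_boot all_order all_algebra all_fingroup.
From mathcomp Require Import cyclic zify.
Set Implicit Arguments. Unset Strict Implicit. Unset Printing Implicit Defensive.
Import GRing.Theory.
Open Scope ring_scope.
Section S.
Variables (A : nmodType) (p2 t : nat) (k : 'I_t -> nat).
Notation V := (H1V p2 k).
Notation adj := (@H1adj p2 t k).
Notation c0 := (inl (inl ord0) : V).
Notation c1 := (inl (inl (lift ord0 ord0)) : V).
Notation c2 := (inl (inl (lift ord0 (lift ord0 ord0))) : V).
Notation c3 := (inl (inl (lift ord0 (lift ord0 (lift ord0 ord0)))) : V).
Notation w j := (inl (inr j) : V).
Notation u i := (inr (inl i) : V).
Notation x s := (inr (inr s) : V).

Lemma H1v1E : H1v1 p2 k = c0. Proof. by congr (inl (inl _)); apply: val_inj. Qed.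

Lemma sum_tag (G : V -> A) i :
  \sum_(s : {i : 'I_t & 'I_(k i)}) (if tag s == i then G (x s) else 0) =
  \sum_(j < k i) G (x (Tagged (fun i => 'I_(k i)) j)).
Proof.
rewrite -big_mkcond /=.
transitivity (\sum_(i' | i' == i) \sum_(j < k i') G (x (Tagged (fun i => 'I_(k i)) j))); last by rewrite big_pred1_eq.
rewrite (sig_big_dep (fun i' => i' == i) (fun _ _ => true)) /=.
by apply: congr_big => // -[a b] /=; case: (a == i).
Qed.

Ltac simp := rewrite big_mkcond !big_sumType /H1adj /= !big_ord_recl big_ord0 /= ?orbF ?sum_tag !big1_eq ?addr0 ?add0r /=.

Lemma sum_c0 (G : V -> A) : \sum_(v | adj c0 v) G v = G c1 + \sum_(i < t) G (u i).
Proof. by simp. Qed.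
Lemma sum_c1 (G : V -> A) : \sum_(v | adj c1 v) G v = G c0 + G c2 + G c3 + \sum_(j < p2) G (w j).
Proof. by simp; rewrite !addrA. Qed.
Lemma sum_c2 (G : V -> A) : \sum_(v | adj c2 v) G v = G c1 + G c3.
Proof. by simp. Qed.
Lemma sum_c3 (G : V -> A) : \sum_(v | adj c3 v) G v = G c1 + G c2.
Proof. by simp. Qed.
Lemma sum_w (G : V -> A) j : \sum_(v | adj (w j) v) G v = G c1.
Proof. by simp. Qed.
Lemma sum_u (G : V -> A) i : \sum_(v | adj (u i) v) G v = G c0 + \sum_(j < k i) G (x (Tagged (fun i => 'I_(k i)) j)).
Proof. simp. under eq_bigr do rewrite orbF. by rewrite sum_tag. Qed.
Lemma sum_x (G : V -> A) s : \sum_(v | adj (x s) v) G v = G (u (tag s)).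
Proof. simp. rewrite -big_mkcond; apply: big_pred1 => j /=; by rewrite eq_sym. Qed.
End S.
Lemma degE p2 t (k : 'I_t -> nat) : deg (@H1adj p2 t k) (H1v1 p2 k) = t.+1.
Proof.
rewrite /deg -sum1_card H1v1E.
rewrite (eq_bigl (fun v => H1adj (inl (inl ord0)) v)); last by move=> v; rewrite inE.
have := @sum_c0 nat p2 t k (fun _ => 1%N).
move=> /= ->. by rewrite sumr_const card_ord natn. Qed.


Lemma modE (A : finZmodType) (g : A) a b : (b <= a)%N ->
  (a == b %[mod #[g]%g]) = (g *+ (a - b) == 0).
Proof. by move=> h; rewrite eqn_mod_dvd // order_dvdn FinRing.zmodXgE. Qed.

Lemma mods (A : finZmodType) (g : A) n :
  [/\ (n.+2 == 1 %[mod #[g]%g]) = (g *+ n.+1 == 0),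
      (n.+2 == 2 %[mod #[g]%g]) = (g *+ n == 0),
      (2 * n.+2 == 2 %[mod #[g]%g]) = (g *+ (n.+1 + n).+1 == 0) &
      (2 * n.+2 == 3 %[mod #[g]%g]) = (g *+ (n.+1 + n) == 0)].
Proof.
rewrite !modE //; last by lia.
have -> : (n.+2 - 1 = n.+1)%N by lia.
have -> : (n.+2 - 2 = n)%N by lia.
have -> : (2 * n.+2 - 2 = (n.+1 + n).+1)%N by lia.
have -> : (2 * n.+2 - 3 = n.+1 + n)%N by lia.
by [].
Qed.

Definition pk (A : finZmodType) (c : A) : A := odflt 0 [pick a : A | (a != 0) && (a != c)].

Lemma pkP (A : finZmodType) (c : A) : (2 < #|A|)%N -> pk c != 0 /\ pk c != c.
Proof.
move=> hA; rewrite /pk; case: pickP => [a /andP[]//|H].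
have : (#|[set: A]| <= #|[set (0%R:A); c]|)%N.
  apply: subset_leq_card; apply/subsetP => a _; rewrite !inE.
  by move: (H a); case: (a == 0); case: (a == c).
rewrite cardsT cards2 => h; exfalso; move: h hA; case: (_ != _) => /=; lia.
Qed.

Definition lab (A : finZmodType) (mu c : A) (m j : nat) : A :=
  if m == 1%N then c else if j == 0%N then pk (c - mu *+ (m - 2))
  else if j == 1%N then (c - mu *+ (m - 2)) - pk (c - mu *+ (m - 2)) else mu.

Lemma lab_sum (A : finZmodType) (mu c : A) m : (0 < m)%N -> \sum_(j < m) lab mu c m j = c.
Proof.
case: m => [|[|m]] // _.
  by rewrite big_ord1.
rewrite !big_ord_recl /= /lab /=.
rewrite (eq_bigr (fun _ => mu)) // sumr_const card_ord.
have -> : (m.+2 - 2 = m)%N by lia.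
by rewrite addrA (addrC (pk _)) subrK subrK.
Qed.

Lemma lab_ne0 (A : finZmodType) (mu c : A) m j : (2 < #|A|)%N -> mu != 0 ->
  (m = 1%N -> c != 0) -> lab mu c m j != 0.
Proof.
move=> hA hmu hc; rewrite /lab.
case: (m =P 1%N) => [e|_]; first exact: hc e.
have [h1 h2] := pkP (c - mu *+ (m - 2)) hA.
case: (j =P 0%N) => // _; case: (j =P 1%N) => // _.
by rewrite subr_eq0 eq_sym.
Qed.

Lemma sum1 (A : zmodType) m (F : 'I_m -> A) (h : m = 1%N) (h0 : (0 < m)%N) :
  \sum_(j < m) F j = F (Ordinal h0).
Proof. by subst m; rewrite big_ord1; congr F; apply: val_inj. Qed.

Close Scope ring_scope.
Theorem proposition3p4 (A : finZmodType) (p2 t : nat) (k : 'I_t -> nat) :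
  2 < #|A| -> 0 < t -> (forall i, 0 < k i) ->
  (vertex_magic A (@H1adj p2 t k) <->
   p2 = 0 /\
   ((exists i, k i = 1) ->
      let d := deg (@H1adj p2 t k) (H1v1 p2 k) in
      exists g : A, [/\ g != 0%R,
        d != 1 %[mod #[g]%g], d != 2 %[mod #[g]%g],
        2 * d != 2 %[mod #[g]%g] & 2 * d != 3 %[mod #[g]%g]]) /\
   ((forall i, 2 <= k i) ->
      let d := deg (@H1adj p2 t k) (H1v1 p2 k) in
      exists g : A, [/\ g != 0%R,
        d != 1 %[mod #[g]%g], d != 2 %[mod #[g]%g]
        & 2 * d != 3 %[mod #[g]%g]])).
Proof.
move=> hA; case: t k => [|n] k // _ Hk.
rewrite degE.
split.
- move=> [l [Hnz [mu Hmu]]].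
  have hu : (forall i, l (inr (inl i)) = mu)%R.
    move=> i; have := Hmu (inr (inr (Tagged (fun i => 'I_(k i)) (Ordinal (Hk i))))).
    by rewrite sum_x.
  have hmu : (mu != 0)%R by rewrite -(hu ord0).
  have h0 := Hmu (inl (inl ord0)); rewrite sum_c0 (eq_bigr (fun _ => mu)) // sumr_const card_ord in h0.
  have h2 := Hmu (inl (inl (lift ord0 (lift ord0 ord0)))); rewrite sum_c2 in h2.
  have h3 := Hmu (inl (inl (lift ord0 (lift ord0 (lift ord0 ord0))))); rewrite sum_c3 in h3.
  have p20 : p2 = 0%N.
    case: (posnP p2) => // /[dup] p2pos.
    have := Hmu (inl (inr (Ordinal p2pos))); rewrite sum_w => hw.
    move: h2; rewrite hw -{2}(addr0 mu) => /addrI h2.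
    by have := Hnz (inl (inl (lift ord0 (lift ord0 (lift ord0 ord0))))); rewrite h2 eqxx.
  subst p2.
  have h1 := Hmu (inl (inl (lift ord0 ord0))); rewrite sum_c1 big_ord0 addr0 in h1.
  have f1 : (l (inl (inl (lift ord0 ord0))) + mu *+ n = 0)%R.
    by apply: (addrI mu); rewrite addr0 addrCA -mulrS h0.
  have f3 : (l (inl (inl (lift ord0 (lift ord0 (lift ord0 ord0))))) = mu *+ n.+1)%R.
    by apply: (addrI (l (inl (inl (lift ord0 ord0))))); rewrite h2 mulrS addrCA f1 addr0.
  have f2 : (l (inl (inl (lift ord0 (lift ord0 ord0)))) = mu *+ n.+1)%R.
    by apply: (addrI (l (inl (inl (lift ord0 ord0))))); rewrite h3 mulrS addrCA f1 addr0.
  have f0 : (l (inl (inl ord0)) + mu *+ (n.+1 + n) = 0)%R.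
    apply: (addrI mu); rewrite addr0 mulrnDr addrCA [(mu + _)%R]addrCA -mulrS addrA.
    by rewrite -{1}f2 -f3.
  have n1 : (mu *+ n.+1 != 0)%R by rewrite -f3.
  have n2 : (mu *+ n != 0)%R.
    apply/eqP => e; move: f1; rewrite e addr0 => /eqP.
    by rewrite (negbTE (Hnz _)).
  have n3 : (mu *+ (n.+1 + n) != 0)%R.
    apply/eqP => e; move: f0; rewrite e addr0 => /eqP.
    by rewrite (negbTE (Hnz _)).
  split => //; split.
  + move=> [i ki] d; exists mu; rewrite /d; have [m1 m2 m3 m4] := mods mu n; rewrite m1 m2 m3 m4; split => //.
    have := Hmu (inr (inl i)); rewrite sum_u (sum1 _ ki (Hk i)) => hs.
    have hx : (l (inr (inr (Tagged (fun i => 'I_(k i)) (Ordinal (Hk i))))) = mu *+ (n.+1 + n).+1)%R.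
      by apply: (addrI (l (inl (inl ord0)))); rewrite hs mulrS addrCA f0 addr0.
    by rewrite -hx.
  + move=> _ d; exists mu; rewrite /d; have [m1 m2 m3 m4] := mods mu n; rewrite m1 m2 m4; split => //.
- move=> [p20 [hw hs]]; subst p2.
  have [mu [hmu n1 n2 n3 n4]] : exists mu : A, [/\ (mu != 0)%R, (mu *+ n.+1 != 0)%R,
      (mu *+ n != 0)%R, (mu *+ (n.+1 + n) != 0)%R &
      (exists i, k i = 1) -> (mu *+ (n.+1 + n).+1 != 0)%R].
    case: (boolP [exists i, k i == 1]) => [/existsP[i /eqP ki] | hne].
      move: (hw (ex_intro _ i ki)) => /= [g [g0]].
      have [m1 m2 m3 m4] := mods g n; rewrite m1 m2 m3 m4 => c1 c2 c3 c4.
      by exists g; split.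
    have hk2 : forall i, 2 <= k i.
      move=> i; have := Hk i; move/existsPn: hne => /(_ i).
      by case: (k i) => [|[|]].
    move: (hs hk2) => /= [g [g0]].
    have [m1 m2 m3 m4] := mods g n; rewrite m1 m2 m4 => c1 c2 c4.
    exists g; split => // -[i ki].
    by have := hk2 i; rewrite ki.
  pose c := (mu *+ (n.+1 + n).+1)%R.
  pose l := fun v : H1V 0 k => match v with
    | inl (inl a) => if (a : nat) == 0 then (- (mu *+ (n.+1 + n)))%R
                     else if (a : nat) == 1 then (- (mu *+ n))%R else (mu *+ n.+1)%R
    | inl (inr _) => mu
    | inr (inl _) => mu
    | inr (inr s) => lab mu c (k (tag s)) (tagged s) end.
  exists l; split.
    case => [[a|j]|[i|s]] /=.
    + by case: a => [[|[|[|[|a]]]] Ha] //=; rewrite ?oppr_eq0.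
    + by case: j.
    + by [].
    + apply: lab_ne0 => // h; apply: n4; exists (tag s); exact: h.
  exists mu; case => [[a|j]|[i|s]].
  + case: a => [[|[|[|[|a]]]] Ha] //.
    * rewrite (_ : Ordinal Ha = ord0); last exact: val_inj.
      rewrite sum_c0 /= (eq_bigr (fun _ => mu)) // sumr_const card_ord.
      by rewrite mulrSr addKr.
    * rewrite (_ : Ordinal Ha = lift ord0 ord0); last exact: val_inj.
      rewrite sum_c1 /= big_ord0 addr0.
      by rewrite -addrA -mulrnDr addnS mulrS addrCA addNr addr0.
    * rewrite (_ : Ordinal Ha = lift ord0 (lift ord0 ord0)); last exact: val_inj.
      by rewrite sum_c2 /= mulrSr addKr.
    * rewrite (_ : Ordinal Ha = lift ord0 (lift ord0 (lift ord0 ord0))); last exact: val_inj.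
      by rewrite sum_c3 /= mulrSr addKr.
  + by case: j.
  + rewrite sum_u /= lab_sum //.
    by rewrite /c (mulrSr mu (n.+1 + n)) addKr.
  + by rewrite sum_x.
Qed.
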